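(* Let $\Delta \geq 0$ and let $H$ be an $n$-vertex graph with maximum degree at most $\Delta$. Then there is a collection of $t \leq 300 \sqrt{\Delta n}$ matchings $M_1, \dotsc, M_t \subseteq H$ such that (M1) each edge of $H$ belongs to exactly two of the matchings $M_1,\dots,M_t$; and (M2) for each $1 \leq i < j \leq t$, the matchings $M_i$ and $M_j$ have at most one edge in common. *)

(* Defs.v *)
From mathcomp Require Import all_boot all_order all_algebra.
Set Implicit Arguments. Unset Strict Implicit. Unset Printing Implicit Defensive.
Import Order.TTheory GRing.Theory Num.Theory.

Definition simple_graph (n : nat) (e : rel 'I_n) : Prop :=
  (forall u v, e u v = e v u) /\ (forall v, ~~ e v v).

Definition edges (n : nat) (e : rel 'I_n) : {set {set 'I_n}} :=
  [set f : {set 'I_n} | [exists u, exists v, e u v && (f == [set u; v])]].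

Definition degree (n : nat) (e : rel 'I_n) (v : 'I_n) : nat :=
  #|[set u | e v u]|.

Definition is_matching (n : nat) (e : rel 'I_n) (M : {set {set 'I_n}}) : Prop :=
  M \subset edges e /\
  (forall f g, f \in M -> g \in M -> f != g -> [disjoint f & g]).

(* Main.v *)
Require Import Defs.
From mathcomp Require Import all_boot all_order all_algebra.
From mathcomp Require Import zify.
Import Order.TTheory GRing.Theory Num.Theory.

Lemma greedy (T : finType) (adj : rel T) (k D : nat) :
  (forall f g, adj f g = adj g f) ->
  forall E : {set T},
  (forall f, f \in E -> #|[set g in E | adj f g]| <= D) ->
  #|E| <= (k - D) * (k - D) ->
  exists phi : T -> nat * nat,
   [/\ (forall f, f \in E -> ((phi f).1 < k) && ((phi f).2 < k)),
   (forall f g, f \in E -> g \in E -> f != g -> phi f != phi g) &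
   (forall f g, f \in E -> g \in E -> f != g -> adj f g ->
       ((phi f).1 != (phi g).1) && ((phi f).2 != (phi g).2))].
Proof.
move=> adjC.
suff H : forall n (E : {set T}), #|E| = n ->
  (forall f, f \in E -> #|[set g in E | adj f g]| <= D) ->
  #|E| <= (k - D) * (k - D) ->
  exists phi : T -> nat * nat,
   [/\ (forall f, f \in E -> ((phi f).1 < k) && ((phi f).2 < k)),
   (forall f g, f \in E -> g \in E -> f != g -> phi f != phi g) &
   (forall f g, f \in E -> g \in E -> f != g -> adj f g ->
       ((phi f).1 != (phi g).1) && ((phi f).2 != (phi g).2))].
  by move=> E; apply: H.
elim=> [|n IH] E cE hD hE.
  exists (fun _ => (0, 0)); move/eqP: cE; rewrite cards_eq0 => /eqP ->.
  by split=> [f|f g|f g]; rewrite inE.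
have [x xE] : exists x, x \in E.
  by apply/set0Pn; rewrite -card_gt0 cE.
have kpos : 0 < k by move: hE; rewrite cE; case: (k) => //.
set E' := E :\ x.
have cE' : #|E'| = n by move: cE; rewrite (cardsD1 x E) xE => -[].
have sE' : E' \subset E by apply: subsetDl.
have inE' : forall y, (y \in E') = (y != x) && (y \in E) by move=> y; rewrite !inE.
have hD' : forall f, f \in E' -> #|[set g in E' | adj f g]| <= D.
  move=> f fE'; apply: leq_trans (hD f (subsetP sE' f fE')).
  apply: subset_leq_card; apply/subsetP=> g; rewrite !inE => /andP[/andP[_ ->] ->].
  by rewrite andbT.
have hE' : #|E'| <= (k - D) * (k - D) by rewrite cE'; apply: leq_trans (leqnSn _) _; rewrite -cE.
have [phi' [bd' inj' adj']] := IH E' cE' hD' hE'.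
clear IH hE'.
move: bd' inj' adj' hE; case: k kpos => // k' _ bd' inj' adj' hE.
set k := k'.+1.
set FA : {set 'I_k} := [set i : 'I_k | [exists g in E', adj x g && (val i == (phi' g).1)]].
set FB : {set 'I_k} := [set i : 'I_k | [exists g in E', adj x g && (val i == (phi' g).2)]].
have sxE : #|[set g in E' | adj x g]| <= D.
  apply: leq_trans (hD x xE); apply: subset_leq_card; apply/subsetP=> g.
  by rewrite !inE => /andP[/andP[_ ->] ->].
have cFA : #|FA| <= D.
  apply: leq_trans sxE; apply: leq_trans (leq_imset_card (fun g => inord (phi' g).1 : 'I_k) _).
  apply: subset_leq_card; apply/subsetP=> i; rewrite inE => /exists_inP[g gE /andP[ag /eqP ig]].
  apply/imsetP; exists g; first by rewrite inE gE ag.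
  by rewrite -ig inord_val.
have cFB : #|FB| <= D.
  apply: leq_trans sxE; apply: leq_trans (leq_imset_card (fun g => inord (phi' g).2 : 'I_k) _).
  apply: subset_leq_card; apply/subsetP=> i; rewrite inE => /exists_inP[g gE /andP[ag /eqP ig]].
  apply/imsetP; exists g; first by rewrite inE gE ag.
  by rewrite -ig inord_val.
set C := [set p : 'I_k * 'I_k | (p.1 \notin FA) && (p.2 \notin FB) &&
           [forall g in E', (val p.1, val p.2) != phi' g]].
set U := [set p : 'I_k * 'I_k | [exists g in E', (val p.1, val p.2) == phi' g]].
have cU : #|U| <= n.
  rewrite -cE'; apply: leq_trans (leq_imset_card (fun g => (inord (phi' g).1, inord (phi' g).2) : 'I_k * 'I_k) _).
  apply: subset_leq_card; apply/subsetP=> -[i j]; rewrite inE => /exists_inP[g gE /eqP ig].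
  apply/imsetP; exists g => //.
  by rewrite -ig /= !inord_val.
have cX : #|setX (~: FA) (~: FB)| <= #|C| + #|U|.
  apply: leq_trans (leq_card_setU C U); apply: subset_leq_card; apply/subsetP=> -[i j].
  rewrite !inE /= => /andP[iA jB]; rewrite iA jB /=.
  case: (boolP [forall g in E', _]) => [//|/forall_inPn[g gE /negPn eg]].
  by rewrite /=; apply/exists_inP; exists g.
have : 0 < #|C|.
  have hX : #|setX (~: FA) (~: FB)| = (k - #|FA|) * (k - #|FB|).
    have h1 := cardsC FA; have h2 := cardsC FB; rewrite card_ord in h1 h2.
    rewrite cardsX; move: h1 h2; move: #|FA| #|~: FA| #|FB| #|~: FB| => a b c d.
    by move=> h1 h2; rewrite -{1}h1 -h2 !addKn.
  have hm : (k - D) * (k - D) <= (k - #|FA|) * (k - #|FB|) by apply: leq_mul; apply: leq_sub2l.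
  move: hE cX cU hm; rewrite cE hX.
  move: (#|C|) (#|U|) ((k - #|FA|) * (k - #|FB|)) ((k - D) * (k - D)) => a b c d.
  clear; lia.
rewrite card_gt0 => /set0Pn[c]; rewrite inE => /andP[/andP[cA cB] /forall_inP cU'].
exists (fun y => if y == x then (val c.1, val c.2) else phi' y); split.
- move=> f fE; case: eqP => [_|/eqP fx]; first by rewrite /= !ltn_ord.
  by apply: bd'; rewrite inE' fx.
- move=> f g fE gE fg.
  case: (eqVneq f x) => [fx|fx]; case: (eqVneq g x) => [gx|gx].
  + by move: fg; rewrite fx gx eqxx.
  + by apply: cU'; rewrite inE' gx.
  + by rewrite eq_sym; apply: cU'; rewrite inE' fx.
  + by apply: inj'; rewrite // inE' ?fx ?gx.
- move=> f g fE gE fg afg.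
  case: (eqVneq f x) => [fx|fx]; case: (eqVneq g x) => [gx|gx].
  + by move: fg; rewrite fx gx eqxx.
  + have gE' : g \in E' by rewrite inE' gx.
    move: cA cB; rewrite !inE /= -fx.
    case: exists_inP => [//|H1 _]; case: exists_inP => [//|H2 _].
    apply/andP; split; apply/negP=> /eqP h; [apply: H1|apply: H2]; exists g => //;
      by rewrite afg h eqxx.
  + have fE' : f \in E' by rewrite inE' fx.
    move: cA cB; rewrite !inE /= -gx.
    case: exists_inP => [//|H1 _]; case: exists_inP => [//|H2 _].
    apply/andP; split; apply/negP=> /eqP h; [apply: H1|apply: H2]; exists f => //;
      by rewrite adjC afg h eqxx.
  + by apply: adj'; rewrite // inE' ?fx ?gx.
Qed.

Section Main.
Variables (n : nat) (e : rel 'I_n).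
Hypothesis sg : simple_graph e.

Definition star (z : 'I_n) : {set {set 'I_n}} := [set [set z; w] | w in [set w | e z w]].

Lemma star_card z : #|star z| <= degree e z.
Proof. exact: leq_imset_card. Qed.

Lemma inN g z : g \in edges e -> z \in g -> g \in star z.
Proof.
case: sg => sym _.
rewrite inE => /existsP[x /existsP[y /andP[exy /eqP ->]]].
move=> zg; rewrite !inE in zg; case/orP: zg => /eqP ->.
  by apply/imsetP; exists y => //; rewrite inE.
by apply/imsetP; exists x; [rewrite inE sym | rewrite setUC].
Qed.

Lemma adj_card d f : (forall v, degree e v <= d) -> f \in edges e ->
  #|[set g in edges e | ~~ [disjoint f & g]]| <= d + d.
Proof.
move=> dle fE.
move: (fE); rewrite inE => /existsP[u /existsP[v /andP[euv /eqP fuv]]].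
apply: (@leq_trans #|star u :|: star v|).
  apply: subset_leq_card; apply/subsetP=> g gin.
  rewrite in_set in gin; case/andP: gin => gE.
  rewrite -setI_eq0 => /set0Pn[z] zfg.
  rewrite in_setI in zfg; case/andP: zfg => zf zg.
  rewrite fuv in_set2 in zf; rewrite in_setU; apply/orP.
  by case/orP: zf => /eqP z0; [left|right]; rewrite -z0 inN.
apply: leq_trans (leq_card_setU _ _) _.
by apply: leq_add; apply: leq_trans (star_card _) (dle _).
Qed.

Lemma edges_card d : (forall v, degree e v <= d) -> #|edges e| <= n * d.
Proof.
move=> dle.
set P := [set p : 'I_n * 'I_n | e p.1 p.2].
have -> : edges e = [set [set p.1; p.2] | p in P].
  apply/setP=> f; apply/idP/idP.
    move=> fE; rewrite in_set in fE; case/existsP: fE => u /existsP[v /andP[euv /eqP ->]].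
    by apply/imsetP; exists (u, v) => //; rewrite in_set.
  case/imsetP=> -[u v] uvP ->; rewrite in_set /= in uvP.
  by rewrite in_set; apply/existsP; exists u; apply/existsP; exists v; rewrite uvP eqxx.
have H := leq_imset_card (fun p : 'I_n * 'I_n => [set p.1; p.2]) (mem P).
refine (leq_trans H _).
have -> : #|P| = \sum_(u : 'I_n) degree e u.
  rewrite /P -sum1dep_card.
  rewrite -(pair_big_dep xpredT (fun u w => e u w) (fun _ _ => 1%N)) /=.
  by apply: eq_bigr => u _; rewrite sum1dep_card.
apply: (@leq_trans (\sum_(u : 'I_n) d)); first by apply: leq_sum => u _; apply: dle.
by rewrite sum_nat_const card_ord.
Qed.

End Main.

Local Open Scope ring_scope.

Theorem lemma6p1 (R : rcfType) (Delta : R) (n : nat) (e : rel 'I_n) :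
  0 <= Delta ->
  simple_graph e ->
  (forall v : 'I_n, (degree e v)%:R <= Delta) ->
  exists (t : nat) (M : 'I_t -> {set {set 'I_n}}),
    [/\ t%:R <= 300 * Num.sqrt (Delta * n%:R),
        (forall i, is_matching e (M i)),
        (forall f, f \in edges e -> #|[set i | f \in M i]| = 2%N) &
        (forall i j : 'I_t, (i < j)%N -> (#|M i :&: M j| <= 1)%N)].
Proof.
move=> D0 sg hdeg.
set d := (\max_(v : 'I_n) degree e v)%N.
have dle : forall v, (degree e v <= d)%N by move=> v; apply: (leq_bigmax v).
have dn : (d <= n)%N.
  apply/bigmax_leqP => v _; rewrite /degree.
  by apply: leq_trans (max_card _) (eq_leq (card_ord n)).
have dD : d%:R <= Delta.
  rewrite /d; elim/big_ind: _ => //.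
  by move=> x y hx hy; rewrite /maxn; case: ifP.
set E := edges e.
set m := #|E|.
have hm : (m <= n * d)%N by apply: edges_card.
have exs : exists s, (m <= s * s)%N.
  by exists m; case: (m) => // m'; rewrite leq_pmull.
case: (ex_minnP exs) => s hs smin.
have hs4 : (s * s <= 4 * m)%N.
  case: s hs smin => [|s'] // hs smin.
  have : ~~ (m <= s' * s')%N by apply/negP => /smin; lia.
  rewrite -ltnNge => h.
  case: s' {hs smin} h => [|s''] h; first by rewrite muln1; move: h; rewrite muln0; lia.
  have h2 : (s''.+2 <= 2 * s''.+1)%N by lia.
  apply: leq_trans (leq_mul h2 h2) _.
  rewrite mulnACA -/(4)%N leq_mul2l /=; exact: ltnW.
pose D := (d + d)%N.
pose k := (D + s)%N.
have hE : (#|E| <= (k - D) * (k - D))%N by rewrite /k addKn.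
have hadj : forall f, f \in E -> (#|[set g in E | ~~ [disjoint f & g]]| <= D)%N.
  by move=> f fE; apply: adj_card.
have adjC : forall f g : {set 'I_n}, ~~ [disjoint f & g] = ~~ [disjoint g & f].
  by move=> f g; rewrite disjoint_sym.
have [phi [bd inj adjp]] := @greedy _ (fun f g : {set 'I_n} => ~~ [disjoint f & g]) k D adjC E hadj hE.
have ht : ((k + k) * (k + k) <= 100 * (d * n))%N.
  have hdd : (d * d <= d * n)%N by apply: leq_mul.
  have hds : (2 * (d * s) <= d * d + s * s)%N.
    case: (leqP d s) => h.
      have [u ->] : exists u, s = (d + u)%N by exists (s - d)%N; rewrite subnKC.
      nia.
    have [u ->] : exists u, d = (s + u)%N by exists (d - s)%N; rewrite subnKC // ltnW.
    nia.
  rewrite /k /D; nia.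
exists (k + k)%N, (fun i : 'I_(k + k) => [set f in E | ((i : nat) == (phi f).1) || ((i : nat) == k + (phi f).2)%N]).
split.
- rewrite -[(k + k)%:R]ger0_norm ?ler0n // -sqrtr_sqr.
  have -> : 300 * Num.sqrt (Delta * n%:R) = Num.sqrt (300 ^+ 2 * (Delta * n%:R)).
    by rewrite (@sqrtrM _ (300 ^+ 2)) ?sqr_ge0 // sqrtr_sqr ger0_norm ?ler0n.
  rewrite ler_sqrt; last by rewrite mulr_ge0 ?sqr_ge0 ?mulr_ge0 ?ler0n.
  apply: (@le_trans _ _ ((100 * (d * n))%N)%:R).
    by rewrite -natrX ler_nat expnS expn1.
  rewrite natrM natrM; apply: ler_pM; rewrite ?ler0n ?mulr_ge0 ?ler0n //.
    by rewrite -natrX ler_nat.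
  by apply: ler_wpM2r; rewrite ?ler0n.
- move=> i; split.
    by apply/subsetP => f; rewrite in_set => /andP[].
  move=> f g; rewrite in_set => /andP[fE hf]; rewrite in_set => /andP[gE hg] fg.
  case: (boolP [disjoint f & g]) => // nd.
  have := adjp f g fE gE fg nd; have := bd f fE; have := bd g gE.
  move: hf hg; move: (phi f).1 (phi f).2 (phi g).1 (phi g).2 (nat_of_ord i) => a b c d' x.
  clear; lia.
- move=> f fE; have /andP[ha hb] := bd f fE.
  have h2 : (k + (phi f).2 < k + k)%N by rewrite ltn_add2l.
  pose o1 : 'I_(k + k) := Ordinal (ltn_addr k ha).
  pose o2 : 'I_(k + k) := Ordinal h2.
  have -> : [set i : 'I_(k + k) | f \in [set f in E | ((i : nat) == (phi f).1) || ((i : nat) == k + (phi f).2)%N]] = [set o1; o2].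
    apply/setP => i; rewrite in_set2 in_set in_set fE /=.
    by rewrite -!val_eqE.
  rewrite cards2; congr (_.+1).
  apply/eqnP => /=; rewrite -val_eqE /=.
  by rewrite neq_ltn (leq_trans ha (leq_addr _ _)).
- move=> i j ij; apply/card_le1_eqP => f g.
  rewrite !in_setI => /andP[fi fj] /andP[gi gj].
  move: fi; rewrite in_set => /andP[fE hfi]; move: fj; rewrite in_set => /andP[_ hfj].
  move: gi; rewrite in_set => /andP[gE hgi]; move: gj; rewrite in_set => /andP[_ hgj].
  apply/eqP; apply: contraT => fg; rewrite eq_sym in fg.
  move: (inj f g fE gE fg) (bd f fE) (bd g gE) hfi hfj hgi hgj ij.
  case: (phi f) => a b; case: (phi g) => c d' /=.
  rewrite xpair_eqE; move: (nat_of_ord i) (nat_of_ord j) => x y.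
  clear; lia.
Qed.
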